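(* Let $d\ge 1$ and $c\ge 1$, let $\mathcal C$ be a finite collection of $c$-fat objects in $\mathbb R^d$, let $G$ be the intersection graph of $\mathcal C$, and let $t\ge 0$ be an integer. Then $\hat\beta_t(G)\le C_d\cdot c\cdot (t+1)^{2d}$, where $C_d$ is a constant depending only on $d$ (i.e. $\hat\beta_t(G)=O(c\,t^{2d})$).
   Context: An object is a bounded subset of $\mathbb R^d$. The size of an object is the side length of its smallest enclosing axis-parallel hypercube; a box of size $r$ is an axis-parallel hypercube of side length $r$. A collection $\mathcal C$ of objects in $\mathbb R^d$ is $c$-fat (for $c\ge 1$) if for every $r\ge 0$ and every box $B$ of size $r$ there is a set of at most $c$ points of $\mathbb R^d$ such that every object of $\mathcal C$ of size at least $r$ that intersects $B$ contains at least one of these points. The intersection graph of $\mathcal C$ has vertex set $\mathcal C$, two objects being adjacent iff they intersect. For an integer $t\ge 0$, a graph $H$ is a $t$-shallow minor ($t$-minor) of a graph $G$ if there are pairwise disjoint sets $V_v\subseteq V(G)$, $v\in V(H)$, each inducing a connected subgraph of $G$ of radius at most $t$, such that $uv\in E(H)$ if and only if some edge of $G$ joins $V_u$ and $V_v$. For a graph $H$, $\beta(H)$ is the minimum number of cliques partitioning $V(H)$; for $x\in V(H)$, $H_x$ is the subgraph induced by the closed neighborhood $N_H[x]$; $\tilde\beta(H)=\min_{x\in V(H)}\beta(H_x)$; and $\hat\beta_t(G)=\max\{\tilde\beta(H): H \text{ a nonempty } t\text{-minor of } G\}$. *)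

(* Defs.v *)
From HB Require Import structures.
From mathcomp Require Import all_boot.
From Stdlib Require Import Reals.
Set Implicit Arguments. Unset Strict Implicit. Unset Printing Implicit Defensive.

Definition point (d : nat) := 'I_d -> R.

Definition in_box d (a : point d) (s : R) (x : point d) : Prop :=
  forall i, (a i <= x i <= a i + s)%R.

Definition obj_bounded d (S : point d -> Prop) : Prop :=
  exists (a : point d) (s : R), (0 <= s)%R /\ forall x, S x -> in_box a s x.

(* "size S >= r": the smallest enclosing axis-parallel hypercube has side >= r,
   i.e. every enclosing box has side >= r (the minimum is attained). *)
Definition size_ge d (S : point d -> Prop) (r : R) : Prop :=
  forall (a : point d) (s : R), (0 <= s)%R ->
    (forall x, S x -> in_box a s x) -> (r <= s)%R.

Definition intersects d (S B : point d -> Prop) : Prop :=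
  exists x, S x /\ B x.

Definition fat_collection d (c : R) (T : finType) (obj : T -> point d -> Prop) : Prop :=
  forall (r : R) (a : point d), (0 <= r)%R ->
    exists ps : seq (point d), (INR (size ps) <= c)%R /\
      forall o : T, size_ge (obj o) r -> intersects (obj o) (in_box a r) ->
        exists p, List.In p ps /\ obj o p.

Definition igraph d (T : finType) (obj : T -> point d -> Prop) (x y : T) : Prop :=
  x <> y /\ exists p, obj x p /\ obj y p.

Fixpoint walk_in (T : finType) (adj : T -> T -> Prop) (S : {set T}) (k : nat)
    (x y : T) : Prop :=
  match k with
  | 0 => x = y /\ x \in S
  | k'.+1 => walk_in adj S k' x y \/
             exists z, walk_in adj S k' x z /\ adj z y /\ y \in S
  end.

Definition radius_le (T : finType) (adj : T -> T -> Prop) (S : {set T}) (t : nat) : Prop :=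
  exists v, v \in S /\ forall w, w \in S -> walk_in adj S t v w.

Definition shallow_minor (t : nat) (U : finType) (hadj : rel U)
    (T : finType) (gadj : T -> T -> Prop) : Prop :=
  exists V : U -> {set T},
    (forall u v, u != v -> [disjoint V u & V v]) /\
    (forall u, radius_le gadj (V u) t) /\
    (forall u v, u != v ->
       (hadj u v <-> exists a b, a \in V u /\ b \in V v /\ gadj a b)).

Definition clique_cover (U : finType) (hadj : rel U) (S : {set U}) (k : nat) : bool :=
  [exists f : {ffun U -> 'I_k}, [forall y, forall z,
     [&& y \in S, z \in S, f y == f z & y != z] ==> hadj y z]].

Lemma clique_cover_ex (U : finType) (hadj : rel U) (S : {set U}) :
  exists k, clique_cover hadj S k.
Proof.
exists #|U|; apply/existsP; exists [ffun y => enum_rank y].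
apply/forallP=> y; apply/forallP=> z; apply/implyP.
case/and4P=> _ _; rewrite !ffunE => /eqP E.
by rewrite (enum_rank_inj E) eqxx.
Qed.

Definition beta (U : finType) (hadj : rel U) (S : {set U}) : nat :=
  ex_minn (clique_cover_ex hadj S).

Definition closed_nbhd (U : finType) (hadj : rel U) (x : U) : {set U} :=
  x |: [set y | hadj x y].

Definition beta_tilde (U : finType) (hadj : rel U) : nat :=
  \big[minn/#|U|]_(x : U) beta hadj (closed_nbhd hadj x).

(* Main.v *)
Require Import Defs.
From HB Require Import structures.
From mathcomp Require Import all_boot.
From Stdlib Require Import Reals.
From Stdlib Require Import Lra Lia Classical ClassicalEpsilon.
From mathcomp Require Import zify.
Set Implicit Arguments. Unset Strict Implicit. Unset Printing Implicit Defensive.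

Open Scope R_scope.

Lemma choiceT (A B : Type) (P : A -> B -> Prop) :
  (forall a, exists b, P a b) -> exists f : A -> B, forall a, P a (f a).
Proof.
move=> H; exists (fun a => proj1_sig (constructive_indefinite_description _ (H a))).
by move=> a; case: (constructive_indefinite_description _ (H a)).
Qed.

Lemma size_glb d (S : point d -> Prop) : obj_bounded S ->
  exists s0, 0 <= s0 /\ size_ge S s0 /\
   forall eps, 0 < eps -> exists a s, 0 <= s /\ s < s0 + eps /\
      forall x, S x -> in_box a s x.
Proof.
move=> [a0 [s1 [hs1 hS1]]].
pose E := fun y => exists a s, 0 <= s /\ (forall x, S x -> in_box a s x) /\ y = - s.
have hb : bound E.
  by exists 0 => y [a [s [hs [_ ->]]]]; lra.
have hne : exists y, E y.
  by exists (- s1), a0, s1; split => //; split.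
case: (completeness _ hb hne) => m [hub hlub].
exists (- m); split; [|split].
- have : m <= 0 by apply: hlub => y [a [s [hs [_ ->]]]]; lra.
  lra.
- move=> a s hs hS. have : - s <= m by apply: hub; exists a, s.
  lra.
- move=> eps heps. apply: NNPP => hno.
  have : m <= m - eps.
    apply: hlub => y [a [s [hs [hS ->]]]].
    have : ~ (s < - m + eps) by move=> hlt; apply: hno; exists a, s.
    move/Rnot_lt_le; lra.
  lra.
Qed.

Definition diam_le d (S : point d -> Prop) (D : R) :=
  forall p q, S p -> S q -> forall i, Rabs (p i - q i) <= D.

Lemma box_diam d (S : point d -> Prop) a s D :
  (forall x, S x -> in_box a s x) -> s <= D -> diam_le S D.
Proof.
move=> hS hD p q hp hq i; have [h1 h2] := hS p hp i; have [h3 h4] := hS q hq i.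
apply: Rabs_le; lra.
Qed.

Lemma diam_from_sz d (S : point d -> Prop) s0 r :
  (forall eps, 0 < eps -> exists a s, 0 <= s /\ s < s0 + eps /\
      forall x, S x -> in_box a s x) -> s0 <= r -> diam_le S r.
Proof.
move=> he hr p q hp hq i; apply: Rle_plus_epsilon => eps heps.
have [a [s [hs [hlt hS]]]] := he eps heps.
apply: (box_diam hS _ hp hq i); lra.
Qed.

Lemma not_size_ge d (S : point d -> Prop) r : ~ size_ge S r ->
  exists a s, 0 <= s /\ s < r /\ forall x, S x -> in_box a s x.
Proof.
move=> hn; apply: NNPP => H; apply: hn => a s hs hS.
apply: Rnot_lt_le => hlt; apply: H; exists a, s; split => //; split.
Qed.

Lemma size_ge_mono d (S : point d -> Prop) r s0 : size_ge S s0 -> r <= s0 -> size_ge S r.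
Proof. move=> h hr a s hs hS; have := h a s hs hS; lra. Qed.

Definition Nr d (T : finType) (obj : T -> point d -> Prop) (p0 : point d) (r : R)
  (z : T) (m : nat) : Prop :=
  exists q, obj z q /\ forall i, Rabs (q i - p0 i) <= INR m * r.

Lemma Nmono d (T : finType) (obj : T -> point d -> Prop) p0 r z (m m' : nat) :
  0 <= r -> (m <= m')%nat -> Nr obj p0 r z m -> Nr obj p0 r z m'.
Proof.
move=> hr hm [q [hq hb]]; exists q; split => // i.
apply: Rle_trans (hb i) _; apply: Rmult_le_compat_r => //; apply: le_INR; exact/leP.
Qed.

Lemma Nstep d (T : finType) (obj : T -> point d -> Prop) p0 r z z' m :
  diam_le (obj z) r -> Nr obj p0 r z m -> (exists p, obj z p /\ obj z' p) ->
  Nr obj p0 r z' m.+1.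
Proof.
move=> hd [q [hq hb]] [p [hp hp']]; exists p; split => // i.
have h1 := hd p q hp hq i; have h2 := hb i; rewrite S_INR.
replace (p i - p0 i) with ((p i - q i) + (q i - p0 i)) by ring.
apply: Rle_trans (Rabs_triang _ _) _; lra.
Qed.

Lemma walk_last (T : finType) adj (S : {set T}) k x y :
  walk_in adj S k x y -> y \in S.
Proof.
elim: k y => [|k IH] y /=; first by case=> ->.
by case=> [/IH|[z [_ [_ ]]]].
Qed.

Lemma walk_fwd d (T : finType) (obj : T -> point d -> Prop) p0 r (S : {set T}) (M : nat) :
  0 <= r ->
  (forall z, z \in S -> Nr obj p0 r z M -> diam_le (obj z) r) ->
  forall k v w m, walk_in (igraph obj) S k v w -> Nr obj p0 r v m ->
    (m + k <= M.+1)%nat -> Nr obj p0 r w (m + k).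
Proof.
move=> hr HS; elim=> [|k IH] v w m /=.
  by case=> -> _; rewrite addn0.
case=> [Hw|[z [Hz [[_ [p [hp1 hp2]]] Hy]]]] hv hk.
  apply: (Nmono (m := (m + k)%nat)) => //; first lia.
  apply: IH Hw hv _; lia.
have hz := IH v z m Hz hv ltac:(lia).
have zS := walk_last Hz.
have dz := HS z zS (Nmono (m := (m + k)%nat) (m' := M) hr ltac:(lia) hz).
have -> : (m + k.+1 = (m + k).+1)%nat by lia.
by apply: Nstep dz hz _; exists p.
Qed.

Lemma walk_bwd d (T : finType) (obj : T -> point d -> Prop) p0 r (S : {set T}) (M : nat) :
  0 <= r ->
  (forall z, z \in S -> Nr obj p0 r z M -> diam_le (obj z) r) ->
  forall k v w m, walk_in (igraph obj) S k v w -> Nr obj p0 r w m ->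
    (m + k <= M.+1)%nat -> Nr obj p0 r v (m + k).
Proof.
move=> hr HS; elim=> [|k IH] v w m /=.
  by case=> -> _; rewrite addn0.
case=> [Hw|[z [Hz [[_ [p [hp1 hp2]]] Hy]]]] hw hk.
  apply: (Nmono (m := (m + k)%nat)) => //; first lia.
  apply: IH Hw hw _; lia.
have dw := HS w Hy (Nmono (m := m) (m' := M) hr ltac:(lia) hw).
have hz : Nr obj p0 r z m.+1 by apply: Nstep dw hw _; exists p.
have -> : (m + k.+1 = m.+1 + k)%nat by lia.
apply: IH Hz hz _; lia.
Qed.

Lemma walk_empty d (T : finType) (obj : T -> point d -> Prop) S k v w :
  walk_in (igraph obj) S k v w -> (forall p, ~ obj v p) -> w = v.
Proof.
elim: k w => [|k IH] w /=; first by case.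
case=> [Hw|[z [Hz [[_ [p [hp _]]] _]]]] he; first exact: IH Hw he.
by move: hp; rewrite (IH z Hz he) => /he.
Qed.

Lemma seq_argmax (A : eqType) (f : A -> R) (s : seq A) (x0 : A) : x0 \in s ->
  exists a, a \in s /\ forall b, b \in s -> f b <= f a.
Proof.
elim: s x0 => [|y s IH] x0 // _.
case: s IH => [|z s] IH.
  by exists y; split; rewrite ?mem_head // => b; rewrite inE => /eqP ->; lra.
have [a [ha hb]] := IH z (mem_head z s).
case: (Rle_dec (f y) (f a)) => h.
- exists a; split; first by rewrite in_cons ha orbT.
  by move=> b; rewrite in_cons => /orP [/eqP ->|/hb].
- exists y; split; first by rewrite in_cons eqxx.
  move=> b; rewrite in_cons => /orP [/eqP ->|/hb]; lra.
Qed.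

Lemma cell1 (M : nat) (r y : R) : (0 < M)%nat -> 0 <= r -> 0 <= y <= INR M * r ->
  exists k, (k < M)%nat /\ INR k * r <= y <= INR k * r + r.
Proof.
elim: M => [//|M IH] _ hr hy.
rewrite S_INR Rmult_plus_distr_r Rmult_1_l in hy.
case: M IH hy => [|M] IH hy.
  by exists 0%nat; split => //; simpl in hy |- *; lra.
case: (Rle_dec y (INR M.+1 * r)) => h.
  have [k [hk hk']] := IH erefl hr ltac:(lra).
  by exists k; split => //; lia.
by exists M.+1; split => //; lra.
Qed.

Lemma size_length (A : Type) (s : seq A) : size s = length s.
Proof. by elim: s => //= a s ->. Qed.

Lemma concat_len (A B : Type) (f : A -> seq B) (l : seq A) (c : R) :
  (forall a, INR (size (f a)) <= c) ->
  INR (length (List.concat (List.map f l))) <= INR (length l) * c.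
Proof.
move=> hf; elim: l => [|a l IH]; first by simpl; lra.
rewrite [List.map _ _]/= [List.concat _]/= [length (a :: l)]/= List.length_app plus_INR S_INR -size_length Rmult_plus_distr_r Rmult_1_l.
have := hf a; lra.
Qed.

Lemma inseq (A : eqType) (x : A) (s : seq A) : x \in s -> List.In x s.
Proof.
elim: s => [//|y s IH]; rewrite in_cons => /orP [/eqP ->|/IH]; [left|right] => //.
Qed.

Lemma bigmin_le (U : finType) (F : U -> nat) (a : nat) (x : U) :
  (\big[minn/a]_(y : U) F y <= F x)%nat.
Proof.
rewrite unlock; have : x \in index_enum U := mem_index_enum x.
elim: (index_enum U) => [//|y s IH] /=.
rewrite in_cons => /orP [/eqP ->|/IH h]; first by rewrite geq_minl.
exact: leq_trans (geq_minr _ _) h.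
Qed.

Lemma INR_expn (m n : nat) : INR (expn m n) = INR m ^ n.
Proof.
elim: n => [|n IH]; first by rewrite expn0.
by rewrite expnS mult_INR IH.
Qed.

Lemma main_claim d (T : finType) (obj : T -> point d -> Prop) (c : R) (U : finType)
  (hadj : rel U) (t : nat) (V : U -> {set T}) (x : U) (sz : T -> R) (m : U -> T) :
  1 <= c -> fat_collection c obj ->
  (forall u v, u != v -> [disjoint V u & V v]) ->
  (forall u, radius_le (igraph obj) (V u) t) ->
  (forall u v, u != v ->
       (hadj u v <-> exists a b, a \in V u /\ b \in V v /\ igraph obj a b)) ->
  (forall o, 0 <= sz o /\ size_ge (obj o) (sz o) /\
     forall eps, 0 < eps -> exists a s, 0 <= s /\ s < sz o + eps /\
        forall x, obj o x -> in_box a s x) ->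
  (forall u, m u \in V u /\ forall o, o \in V u -> sz o <= sz (m u)) ->
  (forall u, sz (m x) <= sz (m u)) ->
  exists K, clique_cover hadj (closed_nbhd hadj x) K /\
     INR K <= INR (expn (2 * (3 * t + 1)) d) * c + 1.
Proof.
move=> hc hfat Vdisj Vrad Vadj hsz hm hx.
set r := sz (m x).
have hr : 0 <= r := (hsz (m x)).1.
have hsym : forall u v, u != v -> hadj u v -> hadj v u.
  move=> u v huv /(Vadj u v huv) [a [b [ha [hb [hab [p [hp1 hp2]]]]]]].
  have hvu : v != u by rewrite eq_sym.
  apply/(Vadj v u hvu); exists b, a; split => //; split => //; split.
    by move=> e; apply: hab.
  by exists p.
have hnb : forall y, y \in closed_nbhd hadj x -> y != x -> hadj x y.
  move=> y; rewrite /closed_nbhd !inE => /orP [/eqP -> | h] //.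
  by rewrite eqxx.
have [cx [hcx hwx]] := Vrad x.
have hpos : 0 <= INR (expn (2 * (3 * t + 1)) d) * c.
  apply: Rmult_le_pos; [exact: pos_INR | lra].
case: (classic (exists p0, obj cx p0)) => [[p0 hp0] | hno]; last first.
  exists 1%nat; split; last by simpl; lra.
  apply/existsP; exists [ffun _ => ord0]; apply/forallP => y; apply/forallP => z.
  apply/implyP => /and4P [hy hz _ hyz].
  have key : forall w, w \in closed_nbhd hadj x -> w = x.
    move=> w hw; apply/eqP; apply: contraT => hwx'.
    have hxw : x != w by rewrite eq_sym.
    have [a [b [ha [hb [_ [p [hpa _]]]]]]] := (Vadj x w hxw).1 (hnb w hw hwx').
    have ea := walk_empty (hwx a ha) (fun p h => hno (ex_intro _ p h)).
    by exfalso; apply: hno; exists p; rewrite -ea.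
  by move: hyz; rewrite (key y hy) (key z hz) eqxx.
pose M := (2 * (3 * t + 1))%nat.
have hM : INR M = 2 * INR (3 * t + 1) by rewrite /M mult_INR.
pose base := fun i : 'I_d => p0 i - INR (3 * t + 1) * r.
pose corner := fun (k : {ffun 'I_d -> 'I_M}) (i : 'I_d) => base i + INR (k i) * r.
have [ps hps] := choiceT (fun k : {ffun 'I_d -> 'I_M} => hfat r (corner k) hr).
pose allps := List.concat (List.map ps (enum {ffun 'I_d -> 'I_M})).
have hcl : forall y, y \in closed_nbhd hadj x -> y != x ->
   exists j, (j < length allps)%coq_nat /\
     exists o, o \in V y /\ obj o (List.nth j allps p0).
  move=> y hy hyx; have hxy : x != y by rewrite eq_sym.
  have [a [b [ha [hb [_ [pab [hpa hpb]]]]]]] := (Vadj x y hxy).1 (hnb y hy hyx).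
  have HSx : forall z, z \in V x -> Nr obj p0 r z t -> diam_le (obj z) r.
    move=> z hz _; have [_ [_ he]] := hsz z; exact: diam_from_sz he ((hm x).2 z hz).
  have N0 : Nr obj p0 r cx 0.
    exists p0; split => // i; rewrite Rminus_diag Rabs_R0 /=; lra.
  have Na := walk_fwd hr HSx (hwx a ha) N0 (_ : (0 + t <= t.+1)%nat).
  rewrite add0n in Na; have {}Na := Na ltac:(lia).
  have Nb : Nr obj p0 r b t.+1 by apply: Nstep (HSx a ha Na) Na _; exists pab.
  have [cy [hcy hwy]] := Vrad y.
  have hex : exists o, o \in V y /\ size_ge (obj o) r /\ Nr obj p0 r o (3 * t + 1).
    apply: NNPP => hno.
    have HSy : forall z, z \in V y -> Nr obj p0 r z (3 * t + 1) -> diam_le (obj z) r.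
      move=> z hz hNz; case: (classic (size_ge (obj z) r)) => hsg.
        by exfalso; apply: hno; exists z.
      have [a' [s [hs [hlt hS]]]] := not_size_ge hsg.
      apply: box_diam hS _; lra.
    have Ncy := walk_bwd hr HSy (hwy b hb) Nb (_ : (t.+1 + t <= (3 * t + 1).+1)%nat).
    have {}Ncy := Ncy ltac:(lia).
    have Nmy := walk_fwd hr HSy (hwy (m y) (hm y).1) Ncy
        (_ : (t.+1 + t + t <= (3 * t + 1).+1)%nat).
    have {}Nmy := Nmy ltac:(lia).
    apply: hno; exists (m y); split; first exact: (hm y).1.
    split; first by apply: size_ge_mono (hsz (m y)).2.1 (hx y).
    apply: Nmono hr _ Nmy; lia.
  have [o [hoy [hso [q [hq hqb]]]]] := hex.
  have hci : forall i : 'I_d, exists k : 'I_M,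
      INR k * r <= q i - base i <= INR k * r + r.
    move=> i; have hqi := hqb i.
    have h1 := Rle_abs (q i - p0 i); have h2 := Rle_abs (- (q i - p0 i)).
    rewrite Rabs_Ropp in h2.
    have hM0 : (0 < M)%nat by rewrite /M; lia.
    have [k [hk hkb]] := cell1 (r := r) (y := q i - base i) hM0 hr
       ltac:(rewrite hM /base; nra).
    by exists (Ordinal hk).
  have [kc hkc] := choiceT hci.
  pose kf := [ffun i => kc i] : {ffun 'I_d -> 'I_M}.
  have hin : in_box (corner kf) r q.
    move=> i; rewrite /corner ffunE; have := hkc i; rewrite /base; lra.
  have [hpsz hpsp] := hps kf.
  have [p [hpin hop]] := hpsp o hso (ex_intro _ q (conj hq hin)).
  have hpall : List.In p allps.
    apply/List.in_concat; exists (ps kf); split => //.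
    apply: List.in_map; apply: inseq; by rewrite mem_enum.
  have [j [hj hjp]] := List.In_nth _ _ p0 hpall.
  by exists j; split => //; exists o; split => //; rewrite hjp.
pose Ex := fun y => exists j, (j < length allps)%coq_nat /\
     exists o, o \in V y /\ obj o (List.nth j allps p0).
pose g := fun y => match excluded_middle_informative (Ex y) with
  | left h => (proj1_sig (constructive_indefinite_description _ h)).+1
  | right _ => 0%nat end.
have hg : forall y, Ex y -> exists j, g y = j.+1 /\ (j < length allps)%coq_nat /\
     exists o, o \in V y /\ obj o (List.nth j allps p0).
  move=> y hy; rewrite /g; case: excluded_middle_informative => [h|//].
  by case: (constructive_indefinite_description _ h) => j hj /=; exists j.
have hgle : forall y, (g y < (length allps).+1)%nat.
  move=> y; rewrite /g; case: excluded_middle_informative => [h|_] //.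
  case: (constructive_indefinite_description _ h) => j [hj _] /=; lia.
exists (length allps).+1; split.
  apply/existsP; exists [ffun y => inord (g y) : 'I_(length allps).+1].
  apply/forallP => y; apply/forallP => z; apply/implyP => /and4P [hy hz hfyz hyz].
  case: (eqVneq y x) => [eyx|nyx].
    rewrite eyx in hyz *; apply: hnb => //; by rewrite eq_sym.
  case: (eqVneq z x) => [ezx|nzx].
    rewrite ezx in hyz *; apply: hsym; first by rewrite eq_sym.
    exact: hnb.
  have [jy [gy [_ [oy [hoy hpy]]]]] := hg y (hcl y hy nyx).
  have [jz [gz [_ [oz [hoz hpz]]]]] := hg z (hcl z hz nzx).
  move: hfyz; rewrite !ffunE => /eqP /(congr1 val).
  rewrite /= !inordK ?hgle // gy gz => -[ejz].
  apply/(Vadj y z hyz); exists oy, oz; split => //; split => //; split.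
    move=> e; move: hoz; rewrite -e (disjointFr (Vdisj y z hyz) hoy) //.
  by exists (List.nth jy allps p0); split => //; rewrite ejz.
rewrite S_INR; apply: Rplus_le_compat_r.
have := @concat_len _ _ ps (enum {ffun 'I_d -> 'I_M}) c (fun k => (hps k).1).
rewrite -(size_length (enum {ffun 'I_d -> 'I_M})) -cardE card_ffun !card_ord.
by [].
Qed.
Close Scope R_scope.

Theorem theorem3p1 (d : nat) (hd : (1 <= d)%N) :
  exists Cd : R,
  forall (c : R) (T : finType) (obj : T -> point d -> Prop),
    (1 <= c)%R ->
    injective obj ->
    (forall o, obj_bounded (obj o)) ->
    fat_collection c obj ->
    forall (t : nat) (U : finType) (hadj : rel U),
      (0 < #|U|)%N ->
      shallow_minor t hadj (igraph obj) ->
      (INR (beta_tilde hadj) <= Cd * c * (INR t + 1) ^ (2 * d))%R.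
Proof.
exists (6 ^ d + 1)%R.
move=> c T obj hc _ hbd hfat t U hadj hU [V [Vdisj [Vrad Vadj]]].
have [sz hsz] := choiceT (fun o => size_glb (hbd o)).
have hm' : forall u, exists o, o \in V u /\ forall o', o' \in V u -> (sz o' <= sz o)%R.
  move=> u; have [v [hv _]] := Vrad u.
  have hv' : v \in enum (V u) by rewrite mem_enum.
  have [o [ho hb]] := seq_argmax sz hv'.
  exists o; split; first by rewrite -mem_enum.
  by move=> o' h; apply: hb; rewrite mem_enum.
have [m hm] := choiceT hm'.
have [u0 _] : exists u0 : U, u0 \in U by apply/card_gt0P.
have hu0 : u0 \in enum U by rewrite mem_enum.
have [x [_ hx]] := seq_argmax (fun u => - sz (m u))%R hu0.
have hx' : forall u, (sz (m x) <= sz (m u))%R.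
  move=> u; have h := hx u; rewrite mem_enum in h; have := h ltac:(done); lra.
have [K [hK hKb]] := main_claim (x := x) hc hfat Vdisj Vrad Vadj hsz hm hx'.
have hbt : (beta_tilde hadj <= K)%N.
  apply: leq_trans (bigmin_le _ _ x) _.
  by rewrite /beta; case: ex_minnP => n _ /(_ K hK).
have hbK : (INR (beta_tilde hadj) <= INR K)%R by apply: le_INR; apply/leP.
rewrite INR_expn in hKb.
set X := (INR (2 * (3 * t + 1)) ^ d)%R in hKb.
set A := ((INR t + 1) ^ (2 * d))%R.
have hX : (X <= 6 ^ d * A)%R.
  rewrite /X; apply: Rle_trans (_ : _ <= (6 * (INR t + 1)) ^ d)%R _.
    apply: pow_incr; split; first exact: pos_INR.
    rewrite mult_INR plus_INR mult_INR /=; lra.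
  rewrite Rpow_mult_distr; apply: Rmult_le_compat_l; first by apply: pow_le; lra.
  apply: Rle_pow; first by have := pos_INR t; lra.
  apply/leP; lia.
have hA : (1 <= A)%R by apply: pow_R1_Rle; have := pos_INR t; lra.
have h6 : (0 <= 6 ^ d)%R by apply: pow_le; lra.
have h1 : (X * c <= 6 ^ d * A * c)%R by apply: Rmult_le_compat_r => //; lra.
have h2 : (1 <= c * A)%R by rewrite -(Rmult_1_l 1); apply: Rmult_le_compat; lra.
nra.
Qed.
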